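(* For every integer $n\ge1$ and every integer $j$ with $1\le j\le n$, setting $\mathcal{B}_{m,i}=\sum_{k=i}^{m}(-1)^{k-i}{m\brace k}{k\brack i}H_k$, one has \[ \mathcal{B}_{n+1,j}=\mathcal{B}_{n,j-1}+\binom{n}{j}\frac{B_{n+1-j}}{n+1-j}. \]
   Context: $B_m$ denotes the $m$th Bernoulli number, defined by $\frac{t}{e^t-1}=\sum_{m\ge0}B_m\frac{t^m}{m!}$. ${k\brack j}$ denotes the unsigned Stirling number of the first kind ($x(x+1)\cdots(x+k-1)=\sum_j{k\brack j}x^j$), ${n\brace k}$ the Stirling number of the second kind ($x^n=\sum_k(-1)^{n-k}{n\brace k}x(x+1)\cdots(x+k-1)$), and $H_k=\sum_{i=1}^k 1/i$ the $k$th harmonic number, $H_0=0$. *)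

(* Defs.v *)
From mathcomp Require Import all_boot all_order all_algebra.
Set Implicit Arguments. Unset Strict Implicit. Unset Printing Implicit Defensive.
Import Order.TTheory GRing.Theory Num.Theory.
Local Open Scope ring_scope.

(* Unsigned Stirling numbers of the first kind [n brack k]:
   x(x+1)...(x+n-1) = sum_k [n brack k] x^k, via the standard recurrence. *)
Fixpoint stirling1 (n k : nat) : nat :=
  match n, k with
  | 0, 0 => 1
  | 0, _.+1 => 0
  | _.+1, 0 => 0
  | n'.+1, k'.+1 => (n' * stirling1 n' k'.+1 + stirling1 n' k')%N
  end.

Fixpoint stirling2 (n k : nat) : nat :=
  match n, k with
  | 0, 0 => 1
  | 0, _.+1 => 0
  | _.+1, 0 => 0
  | n'.+1, k'.+1 => (k'.+1 * stirling2 n' k'.+1 + stirling2 n' k')%N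
  end.

Definition harmonic (k : nat) : rat := \sum_(1 <= i < k.+1) (i%:R)^-1.

(* Bernoulli numbers with t/(e^t - 1) = sum_m B_m t^m/m! (so B_1 = -1/2).
   The generating-function identity (sum_k B_k t^k/k!) * ((e^t-1)/t) = 1
   reads coefficientwise: sum_{k<=m} (B_k/k!) * 1/(m-k+1)! = [m = 0].
   bern_list n = [:: B_0; ...; B_n] solves it recursively. *)
Fixpoint bern_list (n : nat) : seq rat :=
  match n with
  | 0 => [:: 1]
  | n'.+1 =>
      let s := bern_list n' in
      rcons s ((n'.+1)`!%:R *
        - (\sum_(k < n'.+1) (nth 0 s k / (k`!)%:R) / (((n'.+1 - k).+1)`!)%:R))
  end.

Definition bernoulli (m : nat) : rat := nth 0 (bern_list m) m.

Definition calB (m i : nat) : rat :=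
  \sum_(i <= k < m.+1)
     (-1) ^+ (k - i) * (stirling2 m k)%:R * (stirling1 k i)%:R * harmonic k.

(* Main.v *)
Require Import Defs.
From mathcomp Require Import all_boot all_order all_algebra.
From mathcomp Require Import ring zify.
Import GRing.Theory Num.Theory.
Local Open Scope ring_scope.

Lemma s1_small k i : (k < i)%N -> stirling1 k i = 0%N.
Proof.
elim: k i => [|k IH] [|i] //= H.
by rewrite !IH ?muln0 // ltnW.
Qed.

Lemma s2_small n k : (n < k)%N -> stirling2 n k = 0%N.
Proof.
elim: n k => [|n IH] [|k] //= H.
by rewrite !IH ?muln0 // ltnW.
Qed.

Lemma signS (a : nat) : (-1 : rat) ^+ a.+1 = - (-1) ^+ a.
Proof. by rewrite exprS mulN1r. Qed.

Lemma calBE m i : calB m i =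
  \sum_(k < m.+1) (-1) ^+ (k + i) * (stirling2 m k)%:R * (stirling1 k i)%:R * harmonic k.
Proof.
rewrite /calB big_geq_mkord big_mkcond /=; apply: eq_bigr => k _.
case: leqP => Hk.
  have -> : (k + i = (k - i) + 2 * i)%N by lia.
  by rewrite exprD exprM sqrrN expr1n mulr1.
by rewrite s1_small // mulr0 mul0r.
Qed.

Lemma shift_sum (f : nat -> rat) N : f 0%N = 0 -> f N = 0 ->
  \sum_(k < N) f k.+1 = \sum_(k < N) f k.
Proof.
move=> f0 fN.
have H := @big_ord_recl _ 0 +%R N (fun k => f k).
rewrite big_ord_recr /= fN f0 addr0 add0r in H.
by rewrite H.
Qed.

Lemma harmS k : harmonic k.+1 = harmonic k + (k.+1%:R)^-1.
Proof. by rewrite /harmonic big_nat_recr. Qed.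

Lemma calB_rec n j : calB n.+1 j.+1 = calB n j +
  \sum_(k < n.+1) (-1) ^+ (k + j) * (stirling2 n k)%:R * (stirling1 k.+1 j.+1)%:R / (k.+1)%:R.
Proof.
rewrite !calBE big_ord_recl /= mulr0 mul0r add0r.
pose f k := (-1) ^+ (k + j) * k%:R * (stirling2 n k)%:R * (stirling1 k j.+1)%:R * harmonic k : rat.
have Hf : \sum_(k < n.+1) f k.+1 = \sum_(k < n.+1) f k.
  apply: shift_sum; rewrite /f; first by rewrite mulr0 !mul0r.
  by rewrite s2_small // mulr0 !mul0r.
transitivity (\sum_(k < n.+1) (((-1) ^+ (k + j) * (stirling2 n k)%:R *
   (stirling1 k.+1 j.+1)%:R * harmonic k.+1) - f k.+1)).
  apply: eq_bigr => k _; rewrite /f /=.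
  rewrite !add0n !addSn !addnS !signS opprK !natrD !natrM.
  ring.
rewrite sumrB Hf -sumrB -big_split /=; apply: eq_bigr => k _.
rewrite /f /= harmS natrD natrM.
field.
by rewrite -(natrD _ 1) pnatr_eq0.
Qed.
Definition ff (k : nat) : {poly rat} := \prod_(i < k) ('X - (i%:R)%:P).

Lemma ffS k : ff k.+1 = ff k * ('X - (k%:R)%:P).
Proof. by rewrite /ff big_ord_recr. Qed.

Lemma coef_ff k j : (ff k)`_j = (-1) ^+ (k + j) * (stirling1 k j)%:R.
Proof.
elim: k j => [|k IH] j.
  rewrite /ff big_ord0 coef1; case: j => [|j] //=; by rewrite mulr0.
rewrite ffS mulrBr coefB coefMX coefMC; case: j => [|j] /=.
  rewrite IH sub0r mulr0.
  case: k {IH} => [|k] /=; first by rewrite mulr0 oppr0.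
  by rewrite mulr0 mul0r oppr0.
rewrite !IH !addnS !addSn !signS opprK natrD natrM; ring.
Qed.

Lemma horner_ff k x : (ff k).[x] = \prod_(i < k) (x - i%:R).
Proof. by rewrite /ff horner_prod; apply: eq_bigr => i _; rewrite hornerXsubC. Qed.

Lemma ff_diff k x : (ff k.+1).[x + 1] - (ff k.+1).[x] = k.+1%:R * (ff k).[x].
Proof.
rewrite [ff k.+1 in X in _ - X]ffS hornerM hornerXsubC !horner_ff big_ord_recl /=.
have -> : \prod_(i < k) (x + 1 - (bump 0 i)%:R) = \prod_(i < k) (x - i%:R).
  by apply: eq_bigr => i _; rewrite /bump /= add1n -addn1 natrD; ring.
rewrite -natr1; ring.
Qed.

Lemma ff0 k : (ff k.+1).[0] = 0.
Proof. by rewrite horner_ff big_ord_recl /= subr0 mul0r. Qed.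

Lemma stirling2_expand n x :
  \sum_(k < n.+1) (stirling2 n k)%:R * (ff k).[x] = x ^+ n.
Proof.
elim: n => [|n IH].
  by rewrite big_ord_recl big_ord0 /= horner_ff big_ord0 !mulr1 addr0.
rewrite exprS -IH mulr_sumr big_ord_recl /= mul0r add0r.
pose f k := k%:R * (stirling2 n k)%:R * (ff k).[x].
have Hf : \sum_(k < n.+1) f k.+1 = \sum_(k < n.+1) f k.
  apply: shift_sum; rewrite /f; first by rewrite !mul0r.
  by rewrite s2_small // mulr0 mul0r.
transitivity (\sum_(k < n.+1) (f k.+1 + (stirling2 n k)%:R * (ff k.+1).[x])).
  apply: eq_bigr => k _; rewrite /f /bump /= add1n natrD natrM; ring.
rewrite big_split /= Hf -big_split /=; apply: eq_bigr => k _.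
rewrite /f ffS hornerM hornerXsubC; ring.
Qed.
Lemma size_bern p : size (bern_list p) = p.+1.
Proof. by elim: p => [|p IH] //=; rewrite size_rcons IH. Qed.

Lemma nth_bern p k : (k <= p)%N -> nth 0 (bern_list p) k = bernoulli k.
Proof.
elim: p => [|p IH] Hk; first by move: Hk; rewrite leqn0 => /eqP ->.
case: (ltngtP k p.+1) Hk => // [Hlt _|-> _]; last by [].
by rewrite /= nth_rcons size_bern Hlt IH.
Qed.

Lemma bernS p : bernoulli p.+1 = (p.+1)`!%:R *
  - (\sum_(k < p.+1) (bernoulli k / (k`!)%:R) / (((p.+1 - k).+1)`!)%:R).
Proof.
rewrite {1}/bernoulli /= nth_rcons size_bern ltnn eqxx.
congr (_ * - _); apply: eq_bigr => k _; rewrite nth_bern //.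
by rewrite -ltnS.
Qed.

Lemma bern_sum M : \sum_(i < M) ('C(M, i))%:R * bernoulli i = (M == 1%N)%:R.
Proof.
case: M => [|[|p]]; first by rewrite big_ord0.
  by rewrite big_ord1 /= mul1r.
rewrite big_ord_recr /= binSn bernS mulrA -natrM -factS.
rewrite mulrN mulr_sumr -sumrB big1 // => k _.
have Hk : (k <= p.+2)%N by have := ltn_ord k; lia.
rewrite -subSn; last by have := ltn_ord k; lia.
rewrite -(bin_fact Hk) !natrM.
have h1 : (k`!)%:R != 0 :> rat by rewrite pnatr_eq0 -lt0n fact_gt0.
have h2 : ((p.+2 - k)`!)%:R != 0 :> rat by rewrite pnatr_eq0 -lt0n fact_gt0.
apply/eqP; rewrite subr_eq0; apply/eqP; field; by rewrite h1 h2.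
Qed.
Lemma delta_sum N a (F : nat -> rat) : (a < N)%N ->
  \sum_(l < N) (l == a :> nat)%:R * F l = F a.
Proof.
move=> Ha; rewrite (bigD1 (Ordinal Ha)) //= eqxx mul1r big1 ?addr0 //.
move=> i Hi; suff -> : (nat_of_ord i == a) = false by rewrite mul0r.
by apply/negbTE; exact: Hi.
Qed.

Lemma pow_diff a N (x : rat) : (a <= N)%N -> (x + 1) ^+ a - x ^+ a =
  \sum_(l < N.+1) x ^+ l * (('C(a, l))%:R - (l == a :> nat)%:R).
Proof.
move=> Ha; under eq_bigr do rewrite mulrBr.
rewrite sumrB; congr (_ - _).
  rewrite exprD1n (big_ord_widen N.+1 (fun l => x ^+ l *+ 'C(a, l))) // big_mkcond /=.
  apply: eq_bigr => l _; case: ltnP => h; first by rewrite mulr_natr.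
  by rewrite bin_small // mulr0.
rewrite (eq_bigr (fun l : 'I_N.+1 => (l == a :> nat)%:R * x ^+ l)).
  by rewrite delta_sum.
by move=> l _; rewrite mulrC.
Qed.

Lemma bin_swap m i l : (i + l <= m)%N ->
  ('C(m, i) * 'C(m - i, l) = 'C(m, l) * 'C(m - l, i))%N.
Proof.
move=> H.
have e1 : (i <= m)%N by lia.
have e2 : (l <= m - i)%N by lia.
have e3 : (l <= m)%N by lia.
have e4 : (i <= m - l)%N by lia.
have K : (0 < i`! * (l`! * (m - i - l)`!))%N by rewrite !muln_gt0 !fact_gt0.
apply/eqP; rewrite -(eqn_pmul2r K); apply/eqP.
transitivity (m`!).
  rewrite -(bin_fact e1) -(bin_fact e2); ring.
rewrite -(bin_fact e3) -(bin_fact e4) subnAC; ring.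
Qed.
Lemma term_id m i l : (i < m)%N -> (l <= m)%N ->
  (('C(m, i))%:R * (('C(m - i, l))%:R - (l == (m - i)%N)%:R) : rat) =
  if (i < m - l)%N then ('C(m, l) * 'C(m - l, i))%:R else 0.
Proof.
move=> Hi Hl; case: ifP => h.
  have -> : (l == (m - i)%N) = false by apply/negbTE/eqP; lia.
  by rewrite subr0 -natrM bin_swap //; lia.
case: (ltngtP l (m - i)%N) => h'.
- by exfalso; move/negbT: h; lia.
- by rewrite (bin_small h') subrr mulr0.
- by rewrite -h' binn subrr mulr0.
Qed.

Lemma inner n l : (l <= n.+1)%N ->
  \sum_(i < n.+1) ('C(n.+1, i))%:R * bernoulli i / (n.+1)%:R *
     (('C(n.+1 - i, l))%:R - (l == (n.+1 - i)%N)%:R) = (l == n :> nat)%:R.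
Proof.
move=> Hl.
transitivity (('C(n.+1, l))%:R / (n.+1)%:R *
  \sum_(i < n.+1) (if (i < n.+1 - l)%N then ('C(n.+1 - l, i))%:R * bernoulli i else 0)).
  rewrite mulr_sumr; apply: eq_bigr => i _.
  have := @term_id n.+1 i l (ltn_ord i) Hl.
  case: ifP => h E.
    rewrite natrM in E.
    transitivity (bernoulli i / (n.+1)%:R * (('C(n.+1, i))%:R *
      (('C(n.+1 - i, l))%:R - (l == (n.+1 - i)%N)%:R))); first by ring.
    by rewrite E; ring.
  transitivity (bernoulli i / (n.+1)%:R * (('C(n.+1, i))%:R *
    (('C(n.+1 - i, l))%:R - (l == (n.+1 - i)%N)%:R))); first by ring.
  by rewrite E mulr0 mulr0.
rewrite -big_mkcond /= -(big_ord_widen n.+1 (fun i => ('C(n.+1 - l, i))%:R * bernoulli i)); last by rewrite leq_subr.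
rewrite bern_sum.
case: (eqVneq l n) => [->|hn].
  rewrite subSn // subnn eqxx binSn mulr1 divff //.
  by rewrite pnatr_eq0.
have -> : ((n.+1 - l)%N == 1%N) = false by apply/negbTE/eqP; lia.
by rewrite mulr0.
Qed.

Definition Fp (n : nat) : {poly rat} :=
  \sum_(i < n.+1) (('C(n.+1, i))%:R * bernoulli i / (n.+1)%:R) *: 'X^(n.+1 - i).

Lemma F_diff n x : (Fp n).[x + 1] - (Fp n).[x] = x ^+ n.
Proof.
rewrite /Fp !horner_sum -sumrB.
transitivity (\sum_(i < n.+1) \sum_(l < n.+2) x ^+ l *
   (('C(n.+1, i))%:R * bernoulli i / (n.+1)%:R *
     (('C(n.+1 - i, l))%:R - ((l : nat) == (n.+1 - i)%N)%:R))).
  apply: eq_bigr => i _; rewrite !hornerZ !hornerXn -mulrBr.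
  rewrite (@pow_diff (n.+1 - i) n.+1 x (leq_subr i n.+1)) mulr_sumr; apply: eq_bigr => l _; ring.
rewrite exchange_big /=.
rewrite (eq_bigr (fun l : 'I_n.+2 => (l == n :> nat)%:R * x ^+ l)).
  by rewrite delta_sum.
move=> l _; rewrite -mulr_sumr inner; first by rewrite mulrC.
by rewrite -ltnS.
Qed.

Lemma F0 n : (Fp n).[0] = 0.
Proof.
rewrite /Fp horner_sum big1 // => i _.
by rewrite hornerZ hornerXn expr0n subn_eq0 leqNgt ltn_ord mulr0.
Qed.

Lemma coef_F n j : (1 <= j <= n.+1)%N ->
  (Fp n)`_j = ('C(n.+1, n.+1 - j))%:R * bernoulli (n.+1 - j) / (n.+1)%:R.
Proof.
case/andP=> h1 h2.
rewrite /Fp coef_sum.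
have Hi : (n.+1 - j < n.+1)%N by lia.
rewrite (bigD1 (Ordinal Hi)) //= coefZ coefXn.
have -> : (j == (n.+1 - (n.+1 - j))%N) by apply/eqP; lia.
rewrite mulr1 big1 ?addr0 // => i Hne.
rewrite coefZ coefXn.
suff -> : (j == (n.+1 - i)%N) = false by rewrite mulr0.
apply/negbTE/eqP => E; move/eqP: Hne; apply; apply: val_inj => /=; lia.
Qed.
Definition Gp (n : nat) : {poly rat} :=
  \sum_(k < n.+1) ((stirling2 n k)%:R / (k.+1)%:R) *: ff k.+1.

Lemma G_diff n x : (Gp n).[x + 1] - (Gp n).[x] = x ^+ n.
Proof.
rewrite /Gp !horner_sum -sumrB -stirling2_expand; apply: eq_bigr => k _.
rewrite !hornerZ -mulrBr ff_diff.
have h : (k.+1%:R : rat) != 0 by rewrite pnatr_eq0.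
by field; rewrite -(natrD _ 1) pnatr_eq0.
Qed.

Lemma G0 n : (Gp n).[0] = 0.
Proof. by rewrite /Gp horner_sum big1 // => k _; rewrite hornerZ ff0 mulr0. Qed.

Lemma coef_G n j : (Gp n)`_j =
  \sum_(k < n.+1) (stirling2 n k)%:R / (k.+1)%:R * ((-1) ^+ (k.+1 + j) * (stirling1 k.+1 j)%:R).
Proof. by rewrite /Gp coef_sum; apply: eq_bigr => k _; rewrite coefZ coef_ff. Qed.

Lemma GF n : Gp n = Fp n.
Proof.
set H := Gp n - Fp n.
have Hx : forall x, H.[x + 1] = H.[x].
  move=> x; apply/eqP; rewrite -subr_eq0 /H !hornerD !hornerN.
  have := G_diff n x; have := F_diff n x.
  move=> e1 e2; apply/eqP.
  transitivity (((Gp n).[x + 1] - (Gp n).[x]) - ((Fp n).[x + 1] - (Fp n).[x])); first by ring.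
  by rewrite e1 e2 subrr.
have Hn : forall t : nat, H.[t%:R] = 0.
  elim=> [|t IH]; first by rewrite /H hornerD hornerN G0 F0 subrr.
  by rewrite -addn1 natrD Hx.
apply/eqP; rewrite -subr_eq0; apply/eqP.
apply/eqP; apply: contraT => Hne.
have := @max_poly_roots _ H (map (GRing.natmul (1 : rat)) (iota 0 (size H))) Hne.
rewrite size_map size_iota ltnn; apply.
  by apply/allP => y /mapP [t _ ->]; rewrite /root Hn.
by rewrite map_inj_uniq ?iota_uniq //; apply: mulrIn; exact: oner_neq0.
Qed.

Theorem mainTheorem2 (n j : nat) :
  (1 <= n)%N -> (1 <= j <= n)%N ->
  calB n.+1 j =
  calB n j.-1 + ('C(n, j))%:R * (bernoulli (n.+1 - j) / ((n.+1 - j)%N)%:R).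
Proof.
move=> hn /andP [hj1 hjn].
case: j hj1 hjn => [|j] // _ hjn.
rewrite calB_rec /=; congr (_ + _).
transitivity ((Gp n)`_j.+1).
  rewrite coef_G; apply: eq_bigr => k _.
  rewrite !addSn !addnS !signS opprK /=; ring.
have hj : (1 <= j.+1 <= n.+1)%N by apply/andP; split => //; lia.
rewrite (GF n) (@coef_F n j.+1 hj) bin_sub; last by lia.
have e := mul_bin_down n.+1 j.+1.
have h1 : ((n.+1 - j.+1)%N%:R : rat) != 0 by rewrite pnatr_eq0; lia.
have h2 : (n.+1%:R : rat) != 0 by rewrite pnatr_eq0.
have e' : (n.+1%:R * ('C(n, j.+1))%:R : rat) = (n.+1 - j.+1)%N%:R * ('C(n.+1, j.+1))%:R.
  by rewrite -!natrM e.
move: h1 e'; set d := ((n.+1 - j.+1)%N%:R : rat); move=> h1 e'.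
set b := bernoulli _.
move: h2 e'; set c := (n.+1%:R : rat); move=> h2 e'.
clearbody b c d.
apply: (mulfI h1); apply: (mulfI h2).
transitivity (b * (d * ('C(n.+1, j.+1))%:R)).
  by field.
by rewrite -e'; field.
Qed.
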